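(* Let $Q$ be a finite quiver with $kQ$ of finite GK-dimension, and let $M$ be a graded right $kQ$-module with $\dim_kM_j=1$ for all $j\gg0$. Then $\pi^*M\neq0$ if and only if there is a cyclic vertex $w$ with $\pi^*M\cong\pi^*\mathcal O_w$.
   Context: $kQ$ is the path algebra of a finite quiver over a field $k$, graded by path length. $\mathrm{QGr}\,kQ$ is the quotient of graded right modules by torsion modules (modules each of whose elements is annihilated by $(kQ)_{\ge n}$ for some $n$), with quotient functor $\pi^*$. With finite GK-dimension each cyclic vertex $v$ lies on a unique simple cycle $p=(v=v_0,a_1,\dots,a_n,v_n=v)$, and $\mathcal O_v=e_vkQ/\bigoplus p^m a_1\cdots a_i b\,kQ$ (sum over $m\ge0$, $0\le i<n$, arrows $b\neq a_{i+1}$ with source $v_i$). *)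

(* Defs.v *)
From HB Require Import structures.
From mathcomp Require Import all_boot all_order all_algebra.
Set Implicit Arguments. Unset Strict Implicit. Unset Printing Implicit Defensive.
Import Order.TTheory GRing.Theory Num.Theory.
Local Open Scope ring_scope.

Section Quiver.
Variables (k : fieldType) (V A : finType) (src tgt : A -> V).

(* arrows compose left to right: a then b requires tgt a = src b *)
Definition composable (a b : A) : bool := tgt a == src b.
(* s is a path starting at vertex w (the empty sequence is e_w) *)
Definition validFrom (w : V) (s : seq A) : bool :=
  (if s is a :: _ then src a == w else true) && sorted composable s.
Definition endv (w : V) (s : seq A) : V := if s is a :: s' then tgt (last a s') else w.

(* number of paths of length n in Q (the dimension of kQ_n) *)
Definition npaths (n : nat) : nat :=
  if n is 0 then #|V| else #|[pred t : n.-tuple A | sorted composable t]|.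

(* GKdim kQ < oo : with generating subspace V0 = span(e_v, arrows) (which contains 1),
   dim V0^n = number of paths of length <= n, and limsup log(dim V0^n)/log n < oo *)
Definition finite_GKdim : Prop :=
  exists d N : nat, forall n : nat, (N <= n)%N -> (\sum_(l < n.+1) npaths l <= n ^ d)%N.

(* data: homogeneous components and the right action of the generators e_v (degree 0)
   and arrows (degree 1) of kQ *)
Record grmod := GrMod {
  car : int -> lmodType k;
  ide : V -> forall j : int, car j -> car j;
  arr : A -> forall j : int, car j -> car (j + 1)
}.
Arguments ide : clear implicits.
Arguments arr : clear implicits.

(* module axioms: the action is linear and satisfies the defining relations of kQ
   (orthogonal idempotents e_v summing to 1, a = e_{src a} a e_{tgt a}) *)
Definition is_grmod (M : grmod) : Prop :=
  [/\ (forall v j (c : k) (x y : car M j), ide M v j (c *: x + y) = c *: ide M v j x + ide M v j y),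
      (forall a j (c : k) (x y : car M j), arr M a j (c *: x + y) = c *: arr M a j x + arr M a j y) &
   [/\ (forall u v j (x : car M j), ide M v j (ide M u j x) = if u == v then ide M u j x else 0),
      (forall j (x : car M j), \sum_(v : V) ide M v j x = x),
      (forall a j (x : car M j), arr M a j x = arr M a j (ide M (src a) j x)) &
      (forall a v j (x : car M j),
          ide M v (j + 1) (arr M a j x) = if v == tgt a then arr M a j x else 0)]].

Definition spred (M : grmod) := forall j : int, car M j -> Prop.

Definition submod (M : grmod) (P : spred M) : Prop :=
  [/\ (forall j, P j 0),
      (forall j (c : k) (x y : car M j), P j x -> P j y -> P j (c *: x + y)),
      (forall v j (x : car M j), P j x -> P j (ide M v j x)) &
      (forall a j (x : car M j), P j x -> P (j + 1) (arr M a j x))].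

Definition zero_spred (M : grmod) : spred M := fun j x => x = 0.

Fixpoint arrowsInto (M : grmod) (P : spred M) (m : nat) (j : int) (x : car M j) : Prop :=
  match m with
  | 0 => P j x
  | m'.+1 => forall a : A, arrowsInto P m' (arr M a j x)
  end.

(* x . p lies in P for every path p of length >= n (paths = e_v a_1 ... a_m);
   since kQ_{>=n} is spanned by these paths, this says that the class of x in M/P
   is annihilated by (kQ)_{>= n} (P a subspace) *)
Definition killed (M : grmod) (P : spred M) (n : nat) (j : int) (x : car M j) : Prop :=
  forall m : nat, (n <= m)%N -> forall v : V, arrowsInto P m (ide M v j x).

(* pi^*(M/K) ~= pi^*(N/L) in QGr kQ, for submodules K of M and L of N.
   A morphism pi^*(M/K) -> pi^*(N/L) is represented by a graded homomorphism
   f : M'/K -> N/N' with (M/K)/(M'/K) = M/M' torsion and N'/L torsion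
   (Hom_QGr = colim Hom_Gr(X', Y/Y')); it is an isomorphism iff ker f and coker f
   are torsion.  f is given by a (set-theoretic) lift M' -> N. *)
Definition QGr_iso (M : grmod) (K : spred M) (N : grmod) (L : spred N) : Prop :=
  exists (M' : spred M) (N' : spred N) (f : forall j : int, car M j -> car N j),
  [/\ [/\ submod M', (forall j x, K j x -> M' j x) &
          (forall j (x : car M j), exists n, killed M' n x)],
      [/\ submod N', (forall j y, L j y -> N' j y) &
          (forall j (y : car N j), N' j y -> exists n, killed L n y)],
      [/\ (forall j (c : k) (x y : car M j), M' j x -> M' j y ->
             N' j (f j (c *: x + y) - (c *: f j x + f j y))),
          (forall v j (x : car M j), M' j x -> N' j (f j (ide M v j x) - ide N v j (f j x))),
          (forall a j (x : car M j), M' j x ->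
             N' (j + 1) (f (j + 1) (arr M a j x) - arr N a j (f j x))) &
          (forall j (x : car M j), K j x -> N' j (f j x))],
      (forall j (x : car M j), M' j x -> N' j (f j x) -> exists n, killed K n x) &
      (forall j (y : car N j), exists n,
          killed (fun i z => exists x, M' i x /\ N' i (z - f i x)) n y)].

(* pi^* M = 0 in QGr kQ *)
Definition zero_grmod : grmod :=
  @GrMod (fun _ => 'rV[k]_0) (fun _ _ x => x) (fun _ _ _ => 0).

Definition basis (w : V) (n : nat) := {t : n.-tuple A | validFrom w t}.

Definition ekQ_car (w : V) (j : int) : lmodType k :=
  match j with
  | Posz n => {ffun basis w n -> k^o}
  | Negz _ => 'rV[k]_0
  end.

Definition coef (w : V) (j : int) : ekQ_car w j -> seq A -> k :=
  match j return ekQ_car w j -> seq A -> k with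
  | Posz n => fun x s =>
      if insub s is Some t then (if insub t is Some b then x b else 0) else 0
  | Negz _ => fun _ _ => 0
  end.

Definition mkel (w : V) (j : int) : (seq A -> k) -> ekQ_car w j :=
  match j return (seq A -> k) -> ekQ_car w j with
  | Posz n => fun F => [ffun b : basis w n => F (val (val b))]
  | Negz _ => fun _ => 0
  end.

(* e_w kQ, graded by path length, with right multiplication *)
Definition ekQ (w : V) : grmod :=
  @GrMod (ekQ_car w)
    (fun v j x => mkel w j (fun s => if endv w s == v then coef x s else 0))
    (fun a j x => mkel w (j + 1) (fun s =>
        match rev s with
        | a' :: r => if a' == a then coef x (rev r) else 0
        | [::] => 0
        end)).

Definition simple_cycle (w : V) (p : seq A) : bool :=
  [&& p != [::], validFrom w p, endv w p == w & uniq (map src p)].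

(* paths in the right ideal  sum_{m, i, b} p^m a_1 ... a_i b kQ
   (0 <= i < n, b an arrow with source v_i, b <> a_{i+1}) *)
Definition in_gen_ideal (p : seq A) (s : seq A) : Prop :=
  exists (m i : nat) (b : A) (q : seq A),
    [/\ (i < size p)%N, src b = src (nth b p i), b != nth b p i &
        s = flatten (nseq m p) ++ take i p ++ b :: q].

(* the monomial right ideal: spanned by those paths *)
Definition O_ideal (w : V) (p : seq A) : spred (ekQ w) :=
  fun j x => forall s, coef x s != 0 -> in_gen_ideal p s.

(* O_w = e_w kQ / O_ideal w p, presented as the pair (ekQ w, O_ideal w p) *)

End Quiver.

(* Main.v *)
Require Import Defs.
From HB Require Import structures.
From mathcomp Require Import all_boot all_order all_algebra.
From mathcomp Require Import zify ring.
From Stdlib Require Import ClassicalEpsilon Classical.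
Set Implicit Arguments. Unset Strict Implicit. Unset Printing Implicit Defensive.
Import Order.TTheory GRing.Theory Num.Theory.
Local Open Scope ring_scope.


Section Paths.
Variables (V A : finType) (src tgt : A -> V).

Fixpoint vf (w : V) (s : seq A) : bool :=
  if s is a :: s' then (src a == w) && vf (tgt a) s' else true.

Lemma validFromE w s : validFrom src tgt w s = vf w s.
Proof.
elim: s w => [|a s IH] w //=.
rewrite /validFrom /= -IH /validFrom.
case: s {IH} => [|b s] /=; first by rewrite !andbT.
by rewrite /composable [tgt a == _]eq_sym.
Qed.

Lemma endv_cons w a s : endv tgt w (a :: s) = endv tgt (tgt a) s.
Proof. by case: s. Qed.

Lemma vf_cat w s t : vf w (s ++ t) = vf w s && vf (endv tgt w s) t.
Proof.
elim: s w => [|a s IH] w //=.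
rewrite IH. by case: s {IH} => [|b s]; rewrite andbA.
Qed.

Lemma endv_cat w s t : endv tgt w (s ++ t) = endv tgt (endv tgt w s) t.
Proof. elim: s w => [|a s IH] w; first by []. by rewrite cat_cons !endv_cons IH. Qed.

Lemma vf_rcons w s a : vf w (rcons s a) = vf w s && (src a == endv tgt w s).
Proof. by rewrite -cats1 vf_cat /= andbT. Qed.

Lemma endv_rcons w s a : endv tgt w (rcons s a) = tgt a.
Proof. by rewrite -cats1 endv_cat. Qed.

End Paths.

Section EkQ.
Variables (k : fieldType) (V A : finType) (src tgt : A -> V) (w : V).

Local Notation E := (ekQ k src tgt w).

Lemma coef_mkel j (F : seq A -> k) s :
  coef (mkel src tgt w j F) s =
  if (Posz (size s) == j) && validFrom src tgt w s then F s else 0.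
Proof.
case: j => [n|n] /=; last by [].
case: insubP => [t Ht Hts|Hs].
  case: insubP => [b Hb Hbt|Hb].
    by rewrite ffunE Hbt Hts -(eqP Ht) eqxx -Hts Hb.
  by rewrite -Hts (negbTE Hb) andbF.
by rewrite eqz_nat (negbTE Hs).
Qed.

Lemma mkel_coef j (x : car E j) : x = mkel src tgt w j (coef x).
Proof.
case: j x => [n|n] x /=; last by rewrite [x]thinmx0.
apply/ffunP => b; rewrite ffunE.
have h1 := @valK _ _ _ (sval b). rewrite h1. have h2 : insub (sval b) = Some b := valK b. by rewrite h2.
Qed.

Lemma ecoef_supp j (x : car E j) s :
  coef x s != 0 -> (Posz (size s) == j) && validFrom src tgt w s.
Proof.
rewrite {1}(mkel_coef x) coef_mkel.
by case: ifP => //; rewrite eqxx.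
Qed.

Lemma ecoefD j (c : k) (x y : car E j) s :
  coef (c *: x + y) s = c * coef x s + coef y s.
Proof.
case: j x y => [n|n] x y /=; last by rewrite mulr0 addr0.
case: insubP => [t _ _|_]; last by rewrite mulr0 addr0.
case: insubP => [b _ _|_]; last by rewrite mulr0 addr0.
by rewrite !ffunE.
Qed.

Lemma ecoef0 j s : coef (0 : car E j) s = 0.
Proof.
case: j => [n|n] /=; last by [].
case: insubP => // t _ _; case: insubP => // b _ _.
by rewrite ffunE.
Qed.

Lemma ecoefB j (x y : car E j) s : coef (x - y) s = coef x s - coef y s.
Proof.
have := ecoefD (-1) y x s.
by rewrite scaleN1r addrC => ->; rewrite mulN1r addrC.
Qed.

Lemma ecoefZ j (c : k) (x : car E j) s : coef (c *: x) s = c * coef x s.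
Proof. by have := ecoefD c x 0 s; rewrite addr0 ecoef0 addr0. Qed.

Lemma coef_ide v j (x : car E j) s :
  coef (ide v x) s = if endv tgt w s == v then coef x s else 0.
Proof.
rewrite /= coef_mkel.
case: ifP => // /negbT H.
case: ifP => // _.
case: (coef x s =P 0) => // /eqP Hx.
by move: (ecoef_supp Hx); rewrite (negbTE H).
Qed.

Lemma coef_arr a j (x : car E j) s :
  coef (arr a x) s =
  if (Posz (size s) == j + 1) && validFrom src tgt w s then
    (match rev s with a' :: r => if a' == a then coef x (rev r) else 0 | [::] => 0 end)
  else 0.
Proof. by rewrite /= coef_mkel. Qed.

Lemma coef_arr_rcons a j (x : car E j) r b :
  validFrom src tgt w (rcons r b) ->
  coef (arr a x) (rcons r b) = if b == a then coef x r else 0.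
Proof.
move=> Hv; rewrite coef_arr Hv andbT rev_rcons revK size_rcons.
case: ifP => Hs; first by [].
case: ifP => // _; case: (coef x r =P 0) => // /eqP Hx.
move: (ecoef_supp Hx) => /andP[/eqP Hr _].
by move/negbT: Hs; move: Hr; clear; lia.
Qed.

End EkQ.


Section Cycle.
Variables (V A : finType) (src tgt : A -> V) (w : V) (x0 : A) (p : seq A).
Hypothesis Hp0 : (0 < size p)%N.
Hypothesis Hvp : vf src tgt w p.
Hypothesis Hep : endv tgt w p = w.

Fixpoint cp (l : nat) : seq A :=
  if l is l'.+1 then rcons (cp l') (nth x0 p (l' %% size p)) else [::].

Lemma size_cp l : size (cp l) = l.
Proof. by elim: l => //= l IH; rewrite size_rcons IH. Qed.

Lemma nth_cp l i : (i < l)%N -> nth x0 (cp l) i = nth x0 p (i %% size p).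
Proof.
elim: l => // l IH Hi /=.
rewrite nth_rcons size_cp.
case: (ltngtP i l) => H; first by rewrite IH.
  by exfalso; lia.
by rewrite H.
Qed.

Lemma flatten_nseqS q : flatten (nseq q.+1 p) = flatten (nseq q p) ++ p.
Proof.
elim: q => [|q IH]; first by rewrite /= cats0.
change (p ++ flatten (nseq q.+1 p) = flatten (nseq q.+1 p) ++ p).
by rewrite {1}IH catA.
Qed.

Lemma size_flatten_nseq q : size (flatten (nseq q p)) = (q * size p)%N.
Proof. by elim: q => //= q IH; rewrite size_cat IH mulSn. Qed.

Lemma cp_decomp l :
  cp l = flatten (nseq (l %/ size p) p) ++ take (l %% size p) p.
Proof.
elim: l => [|l IH]; first by rewrite div0n mod0n /= take0.
rewrite /= IH rcons_cat -take_nth; last by rewrite ltn_pmod.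
rewrite modnS divnS //.
case: ifP => Hd /=.
  rewrite take0 cats0 add0n take_oversize; first by rewrite -flatten_nseqS.
  have Hr : (size p %| (l %% size p).+1)%N.
    have := divn_eq l (size p).
    move=> E; move: Hd; rewrite {1}E -addnS dvdn_addr //.
    exact: dvdn_mull.
  by apply: dvdn_leq Hr.
by rewrite add0n.
Qed.

Lemma vf_flatten q : vf src tgt w (flatten (nseq q p)) /\ endv tgt w (flatten (nseq q p)) = w.
Proof.
elim: q => [|q [H1 H2]] //.
rewrite flatten_nseqS vf_cat H1 H2 Hvp endv_cat H2 Hep; split => //.
Qed.

Lemma vf_cp l : vf src tgt w (cp l).
Proof.
rewrite cp_decomp vf_cat; have [-> ->] := vf_flatten (l %/ size p) => /=.
move: Hvp; rewrite -{1}(cat_take_drop (l %% size p) p) vf_cat.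
by case/andP.
Qed.

Lemma endv_cp l : endv tgt w (cp l) = src (nth x0 p (l %% size p)).
Proof.
have := vf_cp l.+1; rewrite /= vf_rcons => /andP[_ /eqP ->]. done.
Qed.

Lemma not_gen_cp l : ~ in_gen_ideal src p (cp l).
Proof.
move=> [m [i [b [q [Hi _ Hb Hs]]]]].
have Hpos : (m * size p + i < l)%N.
  have := size_cp l; rewrite Hs !size_cat size_flatten_nseq size_take Hi /=.
  move=> <-; lia.
have := nth_cp Hpos; rewrite Hs nth_cat size_flatten_nseq.
rewrite ifF; last by lia.
rewrite addKn nth_cat size_take Hi ltnn subnn /=.
rewrite modnMDl modn_small // => Eb.
by move: Hb; rewrite Eb (set_nth_default x0) // eqxx.
Qed.

Lemma gen_of_not_cp s : vf src tgt w s -> s != cp (size s) -> in_gen_ideal src p s.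
Proof.
elim/last_ind: s => [|s a IH]; first by rewrite eqxx.
rewrite vf_rcons => /andP[Hv /eqP Ha] Hne.
case: (eqVneq s (cp (size s))) => Es.
  exists (size s %/ size p)%N, (size s %% size p)%N, a, [::].
  have Hr : (size s %% size p < size p)%N by rewrite ltn_pmod.
  split => //.
  - by rewrite (set_nth_default x0) // Ha Es endv_cp size_cp.
  - rewrite (set_nth_default x0) //.
    apply: contraNneq Hne => ->; rewrite size_rcons /=.
    by rewrite -Es.
  - by rewrite catA -cp_decomp -Es cats1.
have [m [i [b [q [Hi Hsb Hb E]]]]] := IH Hv Es.
exists m, i, b, (rcons q a); split => //.
by rewrite E !rcons_cat.
Qed.

End Cycle.

Section CycleE.
Variables (k : fieldType) (V A : finType) (src tgt : A -> V) (w : V) (x0 : A) (p : seq A).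
Hypothesis Hp0 : (0 < size p)%N.
Hypothesis Hvp : vf src tgt w p.
Hypothesis Hep : endv tgt w p = w.

Local Notation E := (ekQ k src tgt w).
Local Notation cp := (cp x0 p).

Lemma O_idealP j (z : car E j) : O_ideal p z <-> forall l, coef z (cp l) = 0.
Proof.
split.
  move=> H l; case: (coef z (cp l) =P 0) => // /eqP Hn; exfalso.
  exact: (not_gen_cp Hp0 Hvp (H _ Hn)).
move=> H s Hs.
have := ecoef_supp Hs; rewrite validFromE => /andP[_ Hv].
apply: (gen_of_not_cp (x0 := x0) Hp0 Hvp Hep Hv).
by apply/eqP => Es; move: Hs; rewrite Es H eqxx.
Qed.

Lemma coef_ide_cp v j (z : car E j) l :
  coef (ide v z) (cp l) = if src (nth x0 p (l %% size p)) == v then coef z (cp l) else 0.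
Proof. by rewrite coef_ide (endv_cp x0 Hp0 Hvp Hep). Qed.

Lemma coef_arr_cp a j (z : car E j) l :
  coef (arr a z) (cp l.+1) = if nth x0 p (l %% size p) == a then coef z (cp l) else 0.
Proof. by rewrite [cp l.+1]/= coef_arr_rcons // validFromE -[rcons _ _]/(cp l.+1) (vf_cp x0 Hp0 Hvp Hep). Qed.

Lemma coef_arr_cp0 a j (z : car E j) : coef (arr a z) (cp 0) = 0.
Proof. by rewrite coef_arr /=; case: ifP. Qed.

Definition cpel j : car E j := mkel src tgt w j (fun s => if s == cp (size s) then 1 else 0).

Lemma coef_cpel j l : coef (cpel j) (cp l) = if Posz l == j then 1 else 0.
Proof. by rewrite coef_mkel size_cp validFromE (vf_cp x0 Hp0 Hvp Hep) andbT eqxx. Qed.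

End CycleE.


Section Along.
Variables (k : fieldType) (V A : finType).

Fixpoint along (M : grmod k V A) (P : spred M) (s : seq A) (j : int) (x : car M j) : Prop :=
  match s with
  | [::] => P j x
  | a :: s' => @along M P s' (j + 1) (arr a x)
  end.

Fixpoint along2 (M N : grmod k V A) (P : forall j, car M j -> car N j -> Prop)
   (s : seq A) (j : int) (x : car M j) (y : car N j) : Prop :=
  match s with
  | [::] => P j x y
  | a :: s' => @along2 M N P s' (j + 1) (arr a x) (arr a y)
  end.

Variables (M N : grmod k V A).

Lemma arrowsInto_along (P : spred M) m j (x : car M j) :
  arrowsInto P m x -> forall s, size s = m -> along P s x.
Proof.
elim: m j x => [|m IH] j x /=; first by move=> H [].
by move=> H [|a s] //= [Hs]; apply: IH.
Qed.

Lemma along_arrowsInto (P : spred M) m j (x : car M j) :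
  (forall s, size s = m -> along P s x) -> arrowsInto P m x.
Proof.
elim: m j x => [|m IH] j x /=; first by move=> H; exact: (H [::]).
move=> H a; apply: IH => s Hs; apply: (H (a :: s)); by rewrite /= Hs.
Qed.

Lemma along_all (P : spred M) s j (x : car M j) :
  (forall i y, i = j + Posz (size s) -> P i y) -> along P s x.
Proof.
elim: s j x => [|a s IH] j x H /=; first by apply: H; rewrite addr0.
apply: IH => i y Hi; apply: H; rewrite Hi /=; lia.
Qed.

Lemma along_mono (P Q : spred M) s j (x : car M j) :
  (forall i y, P i y -> Q i y) -> along P s x -> along Q s x.
Proof. by move=> H; elim: s j x => [|a s IH] j x /=; [apply: H|apply: IH]. Qed.

Lemma along_and (P Q : spred M) s j (x : car M j) :
  along P s x -> along Q s x -> along (fun i y => P i y /\ Q i y) s x.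
Proof. by elim: s j x => [|a s IH] j x /=; [split|apply: IH]. Qed.

Lemma along_end (P : spred M) s j (x : car M j) :
  along P s x -> exists i (y : car M i), P i y.
Proof. by elim: s j x => [|a s IH] j x /=; [exists j, x|apply: IH]. Qed.

Lemma along_cat (P : spred M) s t j (x : car M j) :
  along P (s ++ t) x <-> along (fun i y => along P t y) s x.
Proof. by elim: s j x => [|a s IH] j x /=. Qed.

Lemma along2_intro (R : forall j, car M j -> car N j -> Prop) s j x y :
  (forall a i x y, R i x y -> R (i + 1) (arr a x) (arr a y)) ->
  R j x y -> along2 R s x y.
Proof. by move=> H; elim: s j x y => [|a s IH] j x y //= Hr; apply: IH; apply: H. Qed.

Lemma along2_mono (P Q : forall j, car M j -> car N j -> Prop) s j x y :
  (forall i x y, P i x y -> Q i x y) -> along2 P s x y -> @along2 M N Q s j x y.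
Proof. by move=> H; elim: s j x y => [|a s IH] j x y /=; [apply: H|apply: IH]. Qed.

Lemma along2_l (P : spred M) (Q : forall j, car M j -> car N j -> Prop) s j x y :
  along P s x -> along2 Q s x y -> @along2 M N (fun i x y => P i x /\ Q i x y) s j x y.
Proof. by elim: s j x y => [|a s IH] j x y /=; [split|apply: IH]. Qed.

Lemma along2_r (P : spred N) (Q : forall j, car M j -> car N j -> Prop) s j x y :
  along P s y -> along2 Q s x y -> @along2 M N (fun i x y => P i y /\ Q i x y) s j x y.
Proof. by elim: s j x y => [|a s IH] j x y /=; [split|apply: IH]. Qed.

Lemma along2_end (P : forall j, car M j -> car N j -> Prop) s j x y :
  @along2 M N P s j x y -> exists i x' y', P i x' y'.
Proof. by elim: s j x y => [|a s IH] j x y /=; [exists j, x, y|apply: IH]. Qed.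

End Along.

Section ModFacts.
Variables (k : fieldType) (V A : finType) (src tgt : A -> V) (M : grmod k V A).
Hypothesis hM : is_grmod src tgt M.

Lemma ideD v j (c : k) (x y : car M j) : ide v (c *: x + y) = c *: ide v x + ide v y.
Proof. by case: hM. Qed.
Lemma arrD a j (c : k) (x y : car M j) : arr a (c *: x + y) = c *: arr a x + arr a y.
Proof. by case: hM. Qed.
Lemma ide0 v j : ide v (0 : car M j) = 0.
Proof.
have := ideD v 1 (0 : car M j) 0; rewrite !scale1r addr0 => H.
by have := congr1 (fun z => z - ide v (0 : car M j)) H; rewrite /= subrr addrK => <-.
Qed.
Lemma arr0 a j : arr a (0 : car M j) = 0.
Proof.
have := arrD a 1 (0 : car M j) 0; rewrite !scale1r addr0 => H.
by have := congr1 (fun z => z - arr a (0 : car M j)) H; rewrite /= subrr addrK => <-.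
Qed.
Lemma ideZ v j (c : k) (x : car M j) : ide v (c *: x) = c *: ide v x.
Proof. by have := ideD v c x 0; rewrite !addr0 ide0 addr0. Qed.
Lemma arrZ a j (c : k) (x : car M j) : arr a (c *: x) = c *: arr a x.
Proof. by have := arrD a c x 0; rewrite !addr0 arr0 addr0. Qed.
Lemma ideii u v j (x : car M j) : ide v (ide u x) = if u == v then ide u x else 0.
Proof. by case: hM => _ _ []. Qed.
Lemma ide_sum j (x : car M j) : \sum_(v : V) ide v x = x.
Proof. by case: hM => _ _ []. Qed.
Lemma arr_ide a j (x : car M j) : arr a x = arr a (ide (src a) x).
Proof. by case: hM => _ _ []. Qed.
Lemma ide_arr a v j (x : car M j) :
  ide v (arr a x) = if v == tgt a then arr a x else 0.
Proof. by case: hM => _ _ []. Qed.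

Lemma along_zero s j : along (@zero_spred _ _ _ M) s (0 : car M j).
Proof. by elim: s j => [|a s IH] j //=; rewrite arr0. Qed.

End ModFacts.

Section Submod.
Variables (k : fieldType) (V A : finType) (M : grmod k V A) (P : spred M).
Hypothesis hP : submod P.

Lemma submod_arrowsInto m j (x : car M j) : @P j x -> arrowsInto P m x.
Proof. by case: hP => _ _ _ Ha; elim: m j x => [|m IH] j x //= Hx a; apply: IH; apply: Ha. Qed.

Lemma submod_opp j (x : car M j) : @P j x -> @P j (- x).
Proof. by case: hP => H0 Hl _ _ Hx; have := Hl j (-1) x 0 Hx (H0 j); rewrite addr0 scaleN1r. Qed.

Lemma submod_trans j (x y z : car M j) : @P j (x - y) -> @P j (y - z) -> @P j (x - z).
Proof.
case: hP => _ Hl _ _ H1 H2; have := Hl j 1 _ _ H1 H2.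
by rewrite scale1r addrA subrK.
Qed.

Lemma submod_add j (x y : car M j) : @P j x -> @P j y -> @P j (x + y).
Proof. by case: hP => _ Hl _ _ H1 H2; have := Hl j 1 _ _ H1 H2; rewrite scale1r. Qed.

End Submod.

Section EkQLin.
Variables (k : fieldType) (V A : finType) (src tgt : A -> V) (w : V).
Local Notation E := (ekQ k src tgt w).

Lemma mkel_ext j (F G : seq A -> k) : (forall s, F s = G s) -> mkel src tgt w j F = mkel src tgt w j G.
Proof.
move=> H; case: j => [n|n] /=; last by [].
by apply/ffunP => b; rewrite !ffunE H.
Qed.

Lemma ekQ_ext j (x y : car E j) : (forall s, coef x s = coef y s) -> x = y.
Proof.
by move=> H; rewrite (mkel_coef x) (mkel_coef y); apply: mkel_ext.
Qed.

Lemma ekQ_arrD a j (c : k) (x y : car E j) : arr a (c *: x + y) = c *: arr a x + arr a y.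
Proof.
apply: ekQ_ext => s; rewrite ecoefD !coef_arr.
case: ifP => _; last by rewrite mulr0 addr0.
case: (rev s) => [|a' r]; first by rewrite mulr0 addr0.
by case: ifP => _; rewrite ?ecoefD // mulr0 addr0.
Qed.

Lemma ekQ_arrB a j (x y : car E j) : arr a (x - y) = arr a x - arr a y.
Proof. by rewrite [x - y]addrC -[- y]scaleN1r ekQ_arrD scaleN1r [RHS]addrC. Qed.

End EkQLin.


Section Backward.
Variables (k : fieldType) (V A : finType) (src tgt : A -> V).

Fixpoint cyc (x0 : A) (p : seq A) (l0 kk : nat) : seq A :=
  if kk is kk'.+1 then nth x0 p (l0 %% size p) :: cyc x0 p l0.+1 kk' else [::].

Lemma size_cyc x0 p l0 kk : size (cyc x0 p l0 kk) = kk.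
Proof. by elim: kk l0 => //= kk IH l0; rewrite IH. Qed.

Lemma track (w : V) x0 p (Hp0 : (0 < size p)%N) (Hvp : vf src tgt w p) (Hep : endv tgt w p = w)
   (c : k) kk l0 j (z : car (ekQ k src tgt w) j) :
  j = Posz l0 -> coef z (cp x0 p l0) = c ->
  along (fun i (z' : car (ekQ k src tgt w) i) => exists l, i = Posz l /\ coef z' (cp x0 p l) = c)
        (cyc x0 p l0 kk) z.
Proof.
elim: kk l0 j z => [|kk IH] l0 j z Hj Hc /=; first by exists l0.
apply: IH; first by rewrite Hj; lia.
by rewrite (coef_arr_cp x0 Hp0 Hvp Hep) eqxx.
Qed.

Lemma backward (M : grmod k V A) (hM : is_grmod src tgt M) w p :
  simple_cycle src tgt w p ->
  QGr_iso (@zero_spred _ _ _ M) (O_ideal (src:=src) (tgt:=tgt) (w:=w) p) ->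
  QGr_iso (@zero_spred _ _ _ M) (@zero_spred _ _ _ (zero_grmod k V A)) -> False.
Proof.
move=> /and4P[Hpn Hv He _].
have [x0 _] : {x0 : A | true} by case: p Hpn {Hv He} => [//|a _ _]; exists a.
have Hp0 : (0 < size p)%N by case: p Hpn {Hv He}.
have Hvp : vf src tgt w p by rewrite -validFromE.
have Hep : endv tgt w p = w by apply/eqP.
have Hsrc0 : src (nth x0 p 0) = w.
  by case: p Hp0 Hvp {Hpn Hv He Hep} => //= a p' _ /andP[/eqP].
set E := ekQ k src tgt w.
case=> M1 [N1 [f [[HM1s HKM1 HM1t] [HN1s HLN1 HN1t] [Hflin Hfide Hfarr HfK] Hker Hcok]]].
case=> M0 [N0 [f0 [[HM0s HKM0 HM0t] [HN0s HLN0 HN0t] _ Hker0 _]]].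
have T0 : forall j (x : car M j), M0 j x -> exists n, killed (@zero_spred _ _ _ M) n x.
  move=> j x Hx; apply: Hker0 Hx _.
  have -> : f0 j x = 0 := thinmx0 _.
  by case: HN0s.
pose R := fun i (x : car M i) (z : car E i) => M1 i x /\ N1 i (z - f i x).
have Rstep : forall a i x z, R i x z -> R (i + 1) (arr a x) (arr a z).
  move=> a i x z [Hx Hz]; split; first by case: HM1s => _ _ _ H; apply: H.
  have h1 := Hfarr a i x Hx.
  have h2 : N1 (i + 1) (arr a z - arr a (f i x)).
    by rewrite -ekQ_arrB; case: HN1s => _ _ _ H; apply: H.
  apply: (submod_trans HN1s h2); rewrite -opprB; exact: (submod_opp HN1s h1).
pose Tc := fun i (z' : car E i) => exists l, i = Posz l /\ coef z' (cp x0 p l) = 1.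
have [n1 Hn1] := Hcok 0 (cpel k src tgt w x0 p 0).
have S1 := arrowsInto_along (Hn1 n1 (leqnn _) w) (size_cyc x0 p 0 n1).
have T1 : along Tc (cyc x0 p 0 n1) (ide w (cpel k src tgt w x0 p 0)).
  apply: (track Hp0 Hvp Hep) => //.
  by rewrite (coef_ide_cp x0 Hp0 Hvp Hep) mod0n Hsrc0 eqxx (coef_cpel k x0 Hp0 Hvp Hep).
have [i [z1 [[x1 [Hx1 Hz1]] [l1 [Hi Hc1]]]]] := along_end (along_and S1 T1).
have [n2 Hn2] := HM0t i x1.
have A2 : along M0 (cyc x0 p l1 n2.+1) x1.
  have := arrowsInto_along (Hn2 n2.+1 (leqnSn _) (src (nth x0 p (l1 %% size p)))) (size_cyc x0 p l1 n2.+1).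
  by rewrite /= -(arr_ide hM).
have B2 := @along2_intro _ _ _ M E R (cyc x0 p l1 n2.+1) _ x1 z1 Rstep (conj Hx1 Hz1).
have T2 : along Tc (cyc x0 p l1 n2.+1) z1 by apply: (track Hp0 Hvp Hep).
have [i2 [x2 [z2 [Hx2 [[l2 [Hi2 Hc2]] [HM1x2 HN1z2]]]]]] := along2_end (along2_l A2 (along2_r T2 B2)).
have [n3 Hn3] := T0 _ _ Hx2.
have A3 : along (@zero_spred _ _ _ M) (cyc x0 p l2 n3.+1) x2.
  have := arrowsInto_along (Hn3 n3.+1 (leqnSn _) (src (nth x0 p (l2 %% size p)))) (size_cyc x0 p l2 n3.+1).
  by rewrite /= -(arr_ide hM).
have B3 := @along2_intro _ _ _ M E R (cyc x0 p l2 n3.+1) _ x2 z2 Rstep (conj HM1x2 HN1z2).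
have T3 : along Tc (cyc x0 p l2 n3.+1) z2 by apply: (track Hp0 Hvp Hep).
have [i3 [x3 [z3 [Hx3 [[l3 [Hi3 Hc3]] [HM1x3 HN1z3]]]]]] := along2_end (along2_l A3 (along2_r T3 B3)).
have HNz3 : N1 i3 z3.
  move: HN1z3; rewrite /zero_spred in Hx3; rewrite Hx3 => H.
  have := submod_add HN1s H (HfK i3 0 (erefl _)).
  by rewrite subrK.
have [n4 Hn4] := HN1t i3 z3 HNz3.
set a4 := nth x0 p (l3 %% size p).
have A4 := arrowsInto_along (Hn4 n4.+1 (leqnSn _) (src a4)) (size_cyc x0 p l3 n4.+1).
have T4 : along Tc (cyc x0 p l3 n4.+1) (ide (src a4) z3).
  apply: (track Hp0 Hvp Hep) => //.
  by rewrite (coef_ide_cp x0 Hp0 Hvp Hep) eqxx.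
have [i4 [z4 [HO [l4 [_ Hc4]]]]] := along_end (along_and A4 T4).
have := (O_idealP x0 Hp0 Hvp Hep z4).1 HO l4.
by rewrite Hc4 => /eqP; rewrite oner_eq0.
Qed.

End Backward.


Lemma dchoice (I : Type) (T : I -> Type) (P : forall i, T i -> Prop) :
  (forall i, exists x, P i x) -> exists f : forall i, T i, forall i, P i (f i).
Proof.
move=> H; exists (fun i => proj1_sig (constructive_indefinite_description _ (H i))).
by move=> i; exact: proj2_sig (constructive_indefinite_description _ (H i)).
Qed.

Lemma arrowsInto_all (k : fieldType) (V A : finType) (M : grmod k V A) (P : spred M) m j (x : car M j) :
  (forall i y, P i y) -> arrowsInto P m x.
Proof. by move=> H; apply: along_arrowsInto => s _; apply: along_all => i y _; apply: H. Qed.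

Section Torsion.
Variables (k : fieldType) (V A : finType) (src tgt : A -> V) (M : grmod k V A).
Hypothesis hM : is_grmod src tgt M.

Lemma zero_submod : submod (@zero_spred _ _ _ M).
Proof.
split => //=.
- by move=> j c x y -> ->; rewrite scaler0 addr0.
- by move=> v j x ->; rewrite (ide0 hM).
- by move=> a j x ->; rewrite (arr0 hM).
Qed.

Lemma killed0 n j : killed (@zero_spred _ _ _ M) n (0 : car M j).
Proof.
move=> m _ v; rewrite (ide0 hM).
exact: (submod_arrowsInto zero_submod).
Qed.


Lemma torsion_iso (b : forall j, car M j) (J : int)
  (Hb : forall j, J <= j -> forall y : car M j, exists c : k, y = c *: b j) :
  (forall D : int, exists j, D <= j /\ forall a, arr a (b j) = 0) ->
  QGr_iso (@zero_spred _ _ _ M) (@zero_spred _ _ _ (zero_grmod k V A)).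
Proof.
move=> HD.
exists (fun _ _ => True), (fun _ _ => True), (fun j _ => 0); split.
- split => //; move=> j x; exists 0%N => m _ v; by apply: arrowsInto_all.
- split => //; move=> j y _; exists 0%N => m _ v.
  by apply: arrowsInto_all => i z; rewrite /zero_spred [z]thinmx0.
- by [].
- move=> j x _ _.
  have [j0 [Hj0 Hz]] := HD (Posz (absz j + absz J)).
  exists (absz (j0 - j)).+1 => m Hm v.
  apply: along_arrowsInto => s Hs.
  rewrite -(cat_take_drop (absz (j0 - j)) s).
  have : (absz (j0 - j) < size s)%N by lia.
  case Ed: (drop (absz (j0 - j)) s) => [|a s2]; first by move=> H; move: (size_drop (absz (j0 - j)) s); rewrite Ed /=; lia.
  move=> _; apply/along_cat; apply: along_all => i y Hi.
  have Hi' : i = j0 by rewrite Hi size_take; case: ifP; lia.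
  clear Hi; subst i => /=.
  have [c ->] := Hb j0 (ltac:(lia)) y.
  rewrite (arrZ hM) Hz scaler0; exact: (along_zero hM).
- move=> j y; exists 0%N => m _ v.
  by apply: arrowsInto_all => i z; exists 0.
Qed.

End Torsion.


Lemma leq_expb e x y : (x <= y)%N -> (x ^ e <= y ^ e)%N.
Proof. by move=> H; elim: e => // e IH; rewrite !expnS leq_mul. Qed.

Lemma exp_beats L d N : (0 < L)%N ->
  exists m, [/\ (0 < m)%N, (N <= m * L)%N & ((m * L) ^ d < 2 ^ m)%N].
Proof.
move=> HL.
pose c := (N + d + L * d)%N.
have e1 : forall x, (x < 2 ^ x)%N := fun x => @ltn_expl 2 x (erefl true).
have e2 : (c * (4 * c) + c < 2 ^ (4 * c))%N.
  have h : ((2 * c).+1 <= 2 ^ (2 * c))%N := e1 _.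
  have h2 := leq_mul h h.
  rewrite -expnD in h2.
  have -> : (4 * c = 2 * c + 2 * c)%N by lia.
  apply: leq_trans h2; nia.
pose r := (4 * c)%N.
exists (2 ^ r)%N; split.
- by rewrite expn_gt0.
- have := e1 r; rewrite /r /c; nia.
- rewrite expnMn -expnM.
  have hL : (L ^ d <= 2 ^ (L * d))%N.
    by rewrite expnM; apply: leq_expb; apply: ltnW; apply: e1.
  apply: (leq_ltn_trans (leq_mul (leqnn _) hL)).
  rewrite -expnD ltn_exp2l //.
  have hd : (r * d + L * d <= c * r + c)%N by rewrite /c /r; nia.
  by apply: leq_ltn_trans hd _; rewrite /r.
Qed.

Section GK.
Variables (V A : finType) (src tgt : A -> V).
Hypothesis hGK : finite_GKdim src tgt.

Lemma sizeFN (s : seq A) q : size (flatten (nseq q s)) = (q * size s)%N.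
Proof. by elim: q => //= q IH; rewrite size_cat IH mulSn. Qed.

Lemma vfFN u (s : seq A) q : vf src tgt u s -> endv tgt u s = u ->
  vf src tgt u (flatten (nseq q s)) /\ endv tgt u (flatten (nseq q s)) = u.
Proof.
move=> H1 H2; elim: q => [|q [IH1 IH2]] //=.
by rewrite vf_cat H1 H2 IH1 endv_cat H2 IH2.
Qed.

Lemma no_branch u a b s1 s2 : a != b -> src a = u -> src b = u ->
  vf src tgt (tgt a) s1 -> endv tgt (tgt a) s1 = u ->
  vf src tgt (tgt b) s2 -> endv tgt (tgt b) s2 = u -> False.
Proof.
move=> Hab Ha Hb H1 E1 H2 E2.
pose c1 := a :: s1; pose c2 := b :: s2.
have Hc1 : vf src tgt u c1 by rewrite /= Ha eqxx H1.
have Hc2 : vf src tgt u c2 by rewrite /= Hb eqxx H2.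
have Ec1 : endv tgt u c1 = u by rewrite endv_cons.
have Ec2 : endv tgt u c2 = u by rewrite endv_cons.
pose l1 := size c1; pose l2 := size c2.
pose al := flatten (nseq l2 c1); pose be := flatten (nseq l1 c2).
pose L := (l1 * l2)%N.
have HL : (0 < L)%N by rewrite muln_gt0.
have Hsal : size al = L by rewrite sizeFN mulnC.
have Hsbe : size be = L by rewrite sizeFN.
have Hneq : al != be.
  apply/eqP => E; move/eqP: Hab; apply.
  have Ha1 : head a al = a by [].
  have Hb1 : head a be = b by [].
  by rewrite -Ha1 -Hb1 E.
pose blk := fun x : bool => if x then al else be.
pose word := fun bs : seq bool => flatten (map blk bs).
have Hw : forall bs, vf src tgt u (word bs) /\ endv tgt u (word bs) = u.
  elim => [|x bs [IH1 IH2]] //=.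
  have [B1 B2] : vf src tgt u (blk x) /\ endv tgt u (blk x) = u.
    by case: x; rewrite /blk; apply: vfFN.
  by rewrite vf_cat B1 B2 IH1 endv_cat B2 IH2.
have Hsw : forall bs, size (word bs) = (size bs * L)%N.
  elim => [|x bs IH] //=; rewrite size_cat IH mulSn.
  by case: x; rewrite /blk ?Hsal ?Hsbe.
have Hsblk : forall x, size (blk x) = L by case; rewrite /blk.
have winj : forall bs1 bs2, size bs1 = size bs2 -> word bs1 = word bs2 -> bs1 = bs2.
  elim => [|x r1 IH] [|y r2] //= [Hs] E.
  have Hx : blk x = blk y.
    have := congr1 (take L) E.
    by rewrite -{1}(Hsblk x) take_size_cat // -(Hsblk y) take_size_cat.
  have Exy : x = y.
    by move: Hx; case: (x) ; case: (y) => //= Exy; move: Hneq; rewrite Exy eqxx.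
  subst y; congr (_ :: _); apply: IH Hs _.
  have := congr1 (drop L) E.
  by rewrite -{1}(Hsblk x) drop_size_cat // drop_size_cat.
case: hGK => d [N HN].
have [m [Hm0 HmN Hmexp]] := exp_beats d N HL.
have [nn' Enn] : exists nn', (m * L)%N = nn'.+1.
  by exists (m * L).-1; rewrite prednK // muln_gt0 Hm0.
have key : (2 ^ m <= npaths src tgt (m * L))%N.
  rewrite Enn /npaths.
  pose def := nseq_tuple nn'.+1 a.
  pose F := fun bs : m.-tuple bool => (insubd def (word bs) : nn'.+1.-tuple A).
  have HF : forall bs : m.-tuple bool, val (F bs) = word bs.
    by move=> bs; rewrite val_insubd Hsw size_tuple Enn eqxx.
  have Finj : injective F.
    move=> x y E; apply: val_inj; apply: winj; first by rewrite !size_tuple.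
    by rewrite -!HF E.
  have Hc : #|F @: setT| = (2 ^ m)%N.
    by rewrite card_imset // cardsT card_tuple card_bool.
  rewrite -Hc; apply: subset_leq_card; apply/subsetP => t /imsetP [bs _ ->].
  rewrite inE /= HF.
  have := (Hw bs).1; rewrite -validFromE /validFrom.
  by case/andP.
have Hs : (npaths src tgt (m * L) <= \sum_(i < (m * L).+1) npaths src tgt i)%N.
  by rewrite (bigD1 ord_max) //= leq_addr.
have := HN (m * L)%N HmN.
lia.
Qed.

End GK.


Section Walk1.
Variables (k : fieldType) (V A : finType) (src tgt : A -> V) (M : grmod k V A).
Hypothesis hM : is_grmod src tgt M.
Variable b : forall j : int, car M j.
Variable J : nat.
Hypothesis Hb : forall j : int, Posz J <= j -> b j != 0.
Hypothesis Hspan : forall j : int, Posz J <= j -> forall y : car M j, exists c : k, y = c *: b j.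
Hypothesis Hnz : forall j : int, Posz J <= j -> exists a, arr a (b j) != 0.
Variables (v0 : V) (a0 : A).

Definition cf j (x : car M j) : k := epsilon (inhabits 0) (fun c : k => x = c *: b j).

Lemma cfP j (x : car M j) : Posz J <= j -> x = cf x *: b j.
Proof. by move=> H; exact: (epsilon_spec (inhabits 0) (fun c : k => x = c *: b j) (Hspan H x)). Qed.

Lemma cf_uniq j (x : car M j) c : Posz J <= j -> x = c *: b j -> cf x = c.
Proof.
move=> H E; have := cfP x H; rewrite {1}E => /eqP.
rewrite -subr_eq0 -scalerBl scaler_eq0 (negbTE (Hb H)) orbF subr_eq0 => /eqP ->.
by [].
Qed.

Lemma cfZ j c (x : car M j) : Posz J <= j -> cf (c *: x) = c * cf x.
Proof. by move=> H; apply: cf_uniq => //; rewrite -scalerA -cfP. Qed.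

Lemma cfD j c (x y : car M j) : Posz J <= j -> cf (c *: x + y) = c * cf x + cf y.
Proof. by move=> H; apply: cf_uniq => //; rewrite scalerDl -scalerA -!cfP. Qed.

Lemma cf0 j : Posz J <= j -> cf (0 : car M j) = 0.
Proof. by move=> H; apply: cf_uniq => //; rewrite scale0r. Qed.

Lemma cfb j : Posz J <= j -> cf (b j) = 1.
Proof. by move=> H; apply: cf_uniq => //; rewrite scale1r. Qed.

Definition vt (j : int) : V := epsilon (inhabits v0) (fun v => ide v (b j) = b j).

Lemma vt_ex j : Posz J <= j -> exists v, ide v (b j) = b j.
Proof.
move=> H.
have [v Hv] : exists v, ide v (b j) != 0.
  apply: NNPP => Hn; move/eqP: (Hb H); apply.
  rewrite -(ide_sum hM (b j)) big1 // => v _.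
  by apply/eqP; apply: contraT => Hv; case: (Hn (ex_intro _ v Hv)).
have [c Hc] := Hspan H (ide v (b j)).
exists v.
have Hc0 : c != 0 by apply: contraNneq Hv => c0; rewrite Hc c0 scale0r.
have E2 : (c * c) *: b j = c *: b j.
  rewrite -scalerA -Hc -(ideZ hM) -Hc (ideii hM) eqxx.
  by [].
have E3 : c * c = c * 1.
  move/eqP: E2; rewrite -subr_eq0 -scalerBl scaler_eq0 (negbTE (Hb H)) orbF subr_eq0 mulr1.
  by move/eqP.
by rewrite Hc (mulfI Hc0 E3) scale1r.
Qed.

Lemma vt_b j : Posz J <= j -> ide (vt j) (b j) = b j.
Proof. by move=> H; exact: (epsilon_spec (inhabits v0) (fun v => ide v (b j) = b j) (vt_ex H)). Qed.

Lemma ide_vt j (x : car M j) : Posz J <= j -> ide (vt j) x = x.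
Proof. by move=> H; rewrite (cfP x H) (ideZ hM) vt_b. Qed.

Lemma ide_nvt j (x : car M j) u : Posz J <= j -> u != vt j -> ide u x = 0.
Proof.
move=> H Hu; rewrite (cfP x H) (ideZ hM) -(vt_b H) (ideii hM).
by rewrite eq_sym (negbTE Hu) scaler0.
Qed.

Definition al (j : int) : A := epsilon (inhabits a0) (fun a => arr a (b j) != 0).

Lemma al_nz j : Posz J <= j -> arr (al j) (b j) != 0.
Proof. by move=> H; exact: (epsilon_spec (inhabits a0) (fun a => arr a (b j) != 0) (Hnz H)). Qed.

Lemma nz_src j a : Posz J <= j -> arr a (b j) != 0 -> src a = vt j.
Proof.
move=> H Hn; apply/eqP; apply: contraNT Hn => Hs.
by rewrite (arr_ide hM) (ide_nvt _ H Hs) (arr0 hM).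
Qed.

Lemma nz_tgt j a : Posz J <= j -> arr a (b j) != 0 -> tgt a = vt (j + 1).
Proof.
move=> H Hn; apply/eqP; apply: contraNT Hn => Ht.
have := ide_arr hM a (tgt a) (b j); rewrite eqxx => <-.
by rewrite (ide_nvt _ _ Ht) //; lia.
Qed.

Lemma arr_zero j a (x : car M j) : Posz J <= j -> arr a (b j) = 0 -> arr a x = 0.
Proof. by move=> H Ha; rewrite (cfP x H) (arrZ hM) Ha scaler0. Qed.

Definition W (t : nat) := vt (Posz t).
Definition Al (t : nat) := al (Posz t).

Lemma Al_src t : (J <= t)%N -> src (Al t) = W t.
Proof. by move=> H; apply: nz_src; [|apply: al_nz]; lia. Qed.

Lemma Al_tgt t : (J <= t)%N -> tgt (Al t) = W t.+1.
Proof.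
move=> H; rewrite /W (nz_tgt (j := Posz t)); last (apply: al_nz); try lia.
by congr vt; lia.
Qed.

Definition reach u v := exists s, vf src tgt u s /\ endv tgt u s = v.

Lemma reach_walk t kk : (J <= t)%N -> reach (W t) (W (t + kk)).
Proof.
move=> H; elim: kk => [|kk [s [Hs Es]]]; first by exists [::]; rewrite addn0.
exists (rcons s (Al (t + kk))).
rewrite vf_rcons endv_rcons Hs Al_src; last by lia.
by rewrite Es eqxx Al_tgt ?addnS //; lia.
Qed.

Lemma vf_walk t kk : (J <= t)%N ->
  vf src tgt (W t) (mkseq (fun i => Al (t + i)) kk) /\
  endv tgt (W t) (mkseq (fun i => Al (t + i)) kk) = W (t + kk).
Proof.
move=> H; elim: kk => [|kk [Hs Es]]; first by rewrite addn0.
rewrite mkseqS vf_rcons endv_rcons Hs Al_src; last by lia.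
by rewrite Es eqxx Al_tgt ?addnS //; lia.
Qed.

Definition Rec v := forall D : nat, exists t, (D <= t)%N /\ W t = v.

Lemma eventually_rec : exists D2 : nat, (J <= D2)%N /\ forall t, (D2 <= t)%N -> Rec (W t).
Proof.
have : forall l : seq V, exists D, (J <= D)%N /\ forall t, (D <= t)%N -> W t \in l -> Rec (W t).
  elim => [|v l [D [HJ HD]]]; first by exists J.
  case: (classic (Rec v)) => Hv.
    exists D; split => // t Ht; rewrite inE => /orP [/eqP ->|] //.
    exact: HD.
  have [D' HD'] : exists D', forall t, (D' <= t)%N -> W t != v.
    apply: NNPP => Hn; apply: Hv => D0; apply: NNPP => Hn2; apply: Hn.
    exists D0 => t Ht; apply/eqP => E; apply: Hn2; exists t; split => //.
  exists (maxn D D'); split; first by lia.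
  move=> t Ht; rewrite inE => /orP [/eqP E|Hl].
    by move: (HD' t (ltac:(lia))); rewrite E eqxx.
  by apply: HD => //; lia.
case/(_ (enum V)) => D [HJ HD]; exists D; split => // t Ht.
by apply: HD => //; rewrite mem_enum.
Qed.

End Walk1.


Section Walk2.
Variables (k : fieldType) (V A : finType) (src tgt : A -> V) (M : grmod k V A).
Hypothesis hM : is_grmod src tgt M.
Hypothesis hGK : finite_GKdim src tgt.
Variable b : forall j : int, car M j.
Variable J : nat.
Hypothesis Hb : forall j : int, Posz J <= j -> b j != 0.
Hypothesis Hspan : forall j : int, Posz J <= j -> forall y : car M j, exists c : k, y = c *: b j.
Hypothesis Hnz : forall j : int, Posz J <= j -> exists a, arr a (b j) != 0.
Variables (v0 : V) (a0 : A).
Variable D2 : nat.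
Hypothesis HJD2 : (J <= D2)%N.

Local Notation W := (W b v0).
Local Notation Al := (Al b a0).
Local Notation vt := (vt b v0).
Local Notation al := (al b a0).
Local Notation cf := (cf b).
Hypothesis Hrec : forall t, (D2 <= t)%N -> Rec b v0 (W t).

Lemma Al_src' t : (J <= t)%N -> src (Al t) = W t.
Proof. by move=> H; apply: (Al_src hM Hb Hspan Hnz). Qed.
Lemma Al_tgt' t : (J <= t)%N -> tgt (Al t) = W t.+1.
Proof. by move=> H; apply: (Al_tgt hM Hb Hspan Hnz). Qed.

Lemma back t : (D2 <= t)%N -> reach src tgt (W t.+1) (W t).
Proof.
move=> H; have [t' [Ht' Et']] := Hrec H t.+1.
have := reach_walk hM Hb Hspan Hnz v0 a0 (t := t.+1) (t' - t.+1) (ltac:(lia)).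
by rewrite subnKC // Et'.
Qed.

Lemma nz_uniq t a : (D2 <= t)%N -> arr a (b t) != 0 -> a = Al t.
Proof.
move=> H Hn; apply/eqP; apply/negPn/negP => Hne.
have [s [Hs Es]] := back H.
have HJ : Posz J <= Posz t by lia.
have Ht1 : tgt a = W t.+1.
  by rewrite (nz_tgt hM Hb Hspan v0 HJ Hn) /W; apply: f_equal; lia.
apply: (no_branch hGK (u := W t) Hne).
- exact: (nz_src hM Hb Hspan v0 HJ Hn).
- by apply: Al_src'; lia.
- by rewrite Ht1; exact: Hs.
- by rewrite Ht1; exact: Es.
- by rewrite Al_tgt' //; lia.
- by rewrite Al_tgt' //; lia.
Qed.

Lemma det t t' : (D2 <= t)%N -> (D2 <= t')%N -> W t = W t' -> Al t = Al t'.
Proof.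
move=> H H' E; apply/eqP; apply/negPn/negP => Hne.
have [s [Hs Es]] := back H.
have [s' [Hs' Es']] := back H'.
apply: (no_branch hGK (u := W t) Hne).
- by apply: Al_src'; lia.
- by rewrite E; apply: Al_src'; lia.
- by rewrite Al_tgt' //; lia.
- by rewrite Al_tgt' //; lia.
- by rewrite Al_tgt' //; lia.
- by rewrite Al_tgt' ?E //; lia.
Qed.

Lemma det_W t t' : (D2 <= t)%N -> (D2 <= t')%N -> W t = W t' -> W t.+1 = W t'.+1.
Proof. move=> H H' E; rewrite -!Al_tgt' ?(det H H' E) //; lia. Qed.

Lemma prop_W t t' e : (D2 <= t)%N -> (D2 <= t')%N -> W t = W t' -> W (t + e) = W (t' + e).
Proof.
move=> H H' E; elim: e => [|e IH]; first by rewrite !addn0.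
by rewrite !addnS; apply: det_W => //; lia.
Qed.

Lemma per_ex : exists kk, (0 < kk)%N && (W (D2 + kk) == W D2).
Proof.
have [t' [Ht' Et']] := Hrec (leqnn D2) D2.+1.
exists (t' - D2)%N; apply/andP; split; first by lia.
by rewrite subnKC ?Et' //; lia.
Qed.

Definition per := ex_minn per_ex.

Lemma per_spec : [/\ (0 < per)%N, W (D2 + per) = W D2 &
  forall kk, (0 < kk)%N -> W (D2 + kk) = W D2 -> (per <= kk)%N].
Proof.
rewrite /per; case: ex_minnP => m /andP[Hm /eqP Em] Hmin; split => //.
by move=> kk Hk Ek; apply: Hmin; rewrite Hk Ek eqxx.
Qed.

Lemma per_pos : (0 < per)%N. Proof. by case: per_spec. Qed.

Lemma W_shiftT t : (D2 <= t)%N -> W (t + per) = W t.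
Proof.
move=> H; case: per_spec => _ E _.
have := prop_W (t := D2 + per) (t' := D2) (t - D2) (leq_addr _ _) (leqnn _) E.
by rewrite addnAC subnKC.
Qed.

Lemma W_multT t q : (D2 <= t)%N -> W (t + per * q) = W t.
Proof.
move=> H; elim: q => [|q IH]; first by rewrite muln0 addn0.
have -> : (t + per * q.+1 = (t + per * q) + per)%N by rewrite mulnS; lia.
by rewrite W_shiftT ?IH //; lia.
Qed.

Lemma W_dist t kk : (D2 <= t)%N -> (0 < kk)%N -> (kk < per)%N -> W (t + kk) != W t.
Proof.
move=> H Hk Hkp; apply/negP => /eqP E.
pose e := (t - D2)%N.
have [P EP] : exists P, P = (per * e.+1)%N by exists (per * e.+1)%N.
have HeP : (e.+1 <= P)%N by rewrite EP leq_pmull // per_pos.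
have h := prop_W (t := (t + kk)%N) (t' := t) (P - e) (ltac:(lia)) H E.
have E1 : (t + kk + (P - e) = (D2 + kk) + per * e.+1)%N by rewrite -EP /e; lia.
have E2 : (t + (P - e) = D2 + per * e.+1)%N by rewrite -EP /e; lia.
rewrite E1 E2 !W_multT in h; try lia.
case: per_spec => _ _ Hmin.
by have := Hmin kk Hk h; lia.
Qed.

Definition D0 := (per * D2)%N.
Lemma D0_ge : (D2 <= D0)%N.
Proof. by rewrite /D0 leq_pmull // per_pos. Qed.

Lemma Al_modT t e : (D2 <= t)%N -> Al (t + e) = Al (t + e %% per).
Proof.
move=> H; apply: det; try lia.
have E : (t + e %% per + per * (e %/ per) = t + e)%N.
  by rewrite mulnC -addnA [(e %% per + _)%N]addnC -divn_eq.
by rewrite -E W_multT //; lia.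
Qed.

Definition w := W D0.
Definition x0 := Al D0.
Definition p := mkseq (fun i => Al (D0 + i)) per.

Lemma size_p : size p = per. Proof. by rewrite size_mkseq. Qed.
Lemma p_pos : (0 < size p)%N. Proof. by rewrite size_p per_pos. Qed.

Lemma nth_p i : (i < per)%N -> nth x0 p i = Al (D0 + i).
Proof. by move=> H; rewrite nth_mkseq. Qed.

Lemma Al_align d : (D0 <= d)%N -> Al d = nth x0 p (d %% per).
Proof.
move=> H; rewrite nth_p ?ltn_pmod ?per_pos //.
have -> : d = (D0 + (d - D0))%N by lia.
rewrite Al_modT; last by have := D0_ge; lia.
by rewrite /D0 [(per * D2)%N]mulnC modnMDl.
Qed.

Lemma W_align d : (D0 <= d)%N -> W d = src (nth x0 p (d %% per)).
Proof. by move=> H; rewrite -Al_align // Al_src' //; have := D0_ge; lia. Qed.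

Lemma p_vf : vf src tgt w p.
Proof. by have [] := vf_walk hM Hb Hspan Hnz v0 a0 (t := D0) per (ltac:(have := D0_ge; lia)). Qed.

Lemma p_endv : endv tgt w p = w.
Proof.
have [_ ->] := vf_walk hM Hb Hspan Hnz v0 a0 (t := D0) per (ltac:(have := D0_ge; lia)).
by have := W_multT 1 D0_ge; rewrite muln1.
Qed.

Lemma p_cycle : simple_cycle src tgt w p.
Proof.
apply/and4P; split.
- by rewrite -size_eq0 size_p -lt0n per_pos.
- by rewrite validFromE p_vf.
- by rewrite p_endv.
- rewrite /p /mkseq -map_comp -/(mkseq _ _); apply/mkseq_uniqP => i i' Hi Hi' /=.
  have Hi2 : (i < per)%N by [].
  have Hi2' : (i' < per)%N by [].
  rewrite !Al_src'; try (have := D0_ge; lia).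
  move=> E; apply/eqP; apply/negPn/negP => Hne.
  case: (ltngtP i i') Hne => // Hlt _.
  + have := W_dist (t := (D0 + i)%N) (kk := (i' - i)%N) (ltac:(have := D0_ge; lia)) (ltac:(lia)) (ltac:(lia)).
    by rewrite -addnA subnKC ?E ?eqxx //; lia.
  + have := W_dist (t := (D0 + i')%N) (kk := (i - i')%N) (ltac:(have := D0_ge; lia)) (ltac:(lia)) (ltac:(lia)).
    by rewrite -addnA subnKC ?E ?eqxx //; lia.
Qed.

Definition lam (j : int) : k := cf (arr (al j) (b j)).

Lemma lam_nz j : Posz J <= j -> lam j != 0.
Proof.
move=> H; apply/negP => /eqP E; move/eqP: (al_nz Hnz a0 H); apply.
rewrite (cfP Hspan (arr (al j) (b j))); last by lia.
by rewrite /lam in E; rewrite E scale0r.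
Qed.

Fixpoint Ln (t : nat) : k := if t is t'.+1 then Ln t' / lam (Posz (D0 + t')) else 1.
Definition Lam (j : int) : k := Ln (absz (j - Posz D0)).

Lemma Ln_nz t : Ln t != 0.
Proof.
elim: t => [|t IH] /=; first by rewrite oner_neq0.
by rewrite mulf_neq0 // invr_eq0 lam_nz //; have := D0_ge; lia.
Qed.

Lemma Lam_nz j : Lam j != 0. Proof. exact: Ln_nz. Qed.

Lemma Lam_step j : Posz D0 <= j -> Lam (j + 1) * lam j = Lam j.
Proof.
move=> H; rewrite /Lam.
have -> : absz ((j + 1 - Posz D0)%R) = (absz ((j - Posz D0)%R)).+1 by lia.
rewrite [Ln _.+1]/=.
have -> : Posz (D0 + absz ((j - Posz D0)%R)) = j by lia.
by rewrite mulfVK // lam_nz //; have := D0_ge; lia.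
Qed.

Local Notation E := (ekQ k src tgt w).
Local Notation cp := (cp x0 p).

Definition fm j (x : car M j) : car E j :=
  if Posz D0 <= j then (cf x * Lam j) *: cpel k src tgt w x0 p j else 0.

Lemma coef_fm j (x : car M j) l :
  coef (fm x) (cp l) = if (Posz D0 <= j) && (Posz l == j) then cf x * Lam j else 0.
Proof.
rewrite /fm; case: ifP => H /=; last by rewrite ecoef0.
rewrite ecoefZ (coef_cpel k x0 p_pos p_vf p_endv).
by case: ifP; rewrite ?mulr1 ?mulr0.
Qed.

Lemma vt_al j : Posz D0 <= j -> vt j = src (nth x0 p (absz j %% per)).
Proof. by case: j => [d|d] H; [apply: W_align; lia|lia]. Qed.

Lemma al_al j : Posz D0 <= j -> al j = nth x0 p (absz j %% per).
Proof. by case: j => [d|d] H; [apply: Al_align; lia|lia]. Qed.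

Lemma al_uniq' j a (x : car M j) : Posz D0 <= j -> a != al j -> arr a x = 0.
Proof.
case: j x => [d|d] x H Ha; last by lia.
apply: (arr_zero hM Hspan); first by have := D0_ge; lia.
apply/eqP; apply: contraNT Ha => Hn.
by apply/eqP; apply: (nz_uniq (t := d)) => //; have := D0_ge; lia.
Qed.

Lemma ekQ_arr0 a j : arr a (0 : car E j) = 0.
Proof. by have := ekQ_arrB a (0 : car E j) 0; rewrite subrr => ->; rewrite subrr. Qed.

Lemma iso : QGr_iso (@zero_spred _ _ _ M) (O_ideal (src:=src) (tgt:=tgt) (w:=w) p).
Proof.
have HJ0 : (J <= D0)%N by have := D0_ge; lia.
have HO := O_idealP (k := k) x0 p_pos p_vf p_endv.
pose Mp := (fun j (x : car M j) => Posz D0 <= j \/ x = 0).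
have Mp0 : forall j (x : car M j), Mp j x -> ~~ (Posz D0 <= j) -> x = 0.
  by move=> j x [H|->] // Hn; rewrite H in Hn.
have cf_0 : forall j, Posz D0 <= j -> cf (0 : car M j) = 0.
  by move=> j H; apply: (cf0 Hb Hspan); lia.
have fm0 : forall j, fm (0 : car M j) = 0.
  by move=> j; rewrite /fm; case: ifP => H //; rewrite cf_0 // mul0r scale0r.
have Osub : submod (O_ideal (k:=k) (src:=src) (tgt:=tgt) (w:=w) p).
  split.
  - by move=> j; apply/HO => l; rewrite ecoef0.
  - by move=> j c x y /HO Hx /HO Hy; apply/HO => l; rewrite ecoefD Hx Hy mulr0 addr0.
  - by move=> v j x /HO Hx; apply/HO => l; rewrite (coef_ide_cp x0 p_pos p_vf p_endv) Hx if_same.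
  - move=> a j x /HO Hx; apply/HO => -[|l]; first by rewrite coef_arr_cp0.
    by rewrite (coef_arr_cp x0 p_pos p_vf p_endv) Hx if_same.
exists Mp, (O_ideal (src:=src) (tgt:=tgt) (w:=w) p), fm; split.
- split.
  + split.
    * by move=> j; right.
    * move=> j c x y Hx Hy; case: (boolP (Posz D0 <= j)) => H; first by left.
      by right; rewrite (Mp0 _ _ Hx H) (Mp0 _ _ Hy H) scaler0 addr0.
    * by move=> v j x [H|->]; [left|right; rewrite (ide0 hM)].
    * by move=> a j x [H|->]; [left; lia|right; rewrite (arr0 hM)].
  + by move=> j x ->; right.
  + move=> j x; exists (absz (Posz D0 - j)) => m Hm v.
    by apply: along_arrowsInto => s Hs; apply: along_all => i y Hi; left; lia.
- split => //.
  move=> j y Hy; exists 0%N => m _ v.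
  apply: (submod_arrowsInto Osub); by case: Osub => _ _ H _; apply: H.
- split.
  + move=> j c x y _ _; apply/HO => l.
    rewrite ecoefB ecoefD !coef_fm; case: ifP => [/andP[H _]|_]; last by rewrite mulr0 addr0 subrr.
    by rewrite (cfD Hb Hspan) ?mulrDl ?mulrA ?subrr //; lia.
  + move=> v j x Hx; apply/HO => l.
    rewrite ecoefB (coef_ide_cp x0 p_pos p_vf p_endv) !coef_fm.
    case: (boolP ((Posz D0 <= j) && (Posz l == j))) => [/andP[H /eqP El]|_]; last by rewrite if_same subrr.
    have Hl : l = absz j by lia.
    rewrite Hl size_p -(vt_al H).
    case: (eqVneq (vt j) v) => [<-|Hv].
      by rewrite (ide_vt hM Hb Hspan v0) ?subrr //; lia.
    rewrite (ide_nvt hM Hb Hspan (v0 := v0)) ?cf_0 ?mul0r ?subrr //; first by lia.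
    by rewrite eq_sym.
  + move=> a j x Hx; apply/HO => l.
    case: (boolP (Posz D0 <= j)) => Hj; last first.
      by rewrite (Mp0 _ _ Hx Hj) (arr0 hM) !fm0 ekQ_arr0 subrr ecoef0.
    rewrite ecoefB coef_fm.
    case: l => [|l].
      rewrite coef_arr_cp0 subr0.
      have -> : (Posz 0 == j + 1) = false by apply/eqP; lia.
      by rewrite andbF.
    rewrite (coef_arr_cp x0 p_pos p_vf p_endv) coef_fm.
    case: (eqVneq (Posz l) j) => [El|Nl]; last first.
      have -> : (Posz l.+1 == j + 1) = false by apply/eqP; lia.
      by rewrite !andbF if_same subrr.
    subst j.
    have -> : (Posz D0 <= Posz l + 1) && (Posz l.+1 == Posz l + 1) = true.
      by apply/andP; split; [lia|apply/eqP; lia].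
    rewrite Hj andbT size_p.
    have Eal := al_al Hj; rewrite /= in Eal; rewrite -Eal.
    case: (eqVneq (al (Posz l)) a) => [<-|Ha].
      have Ex := cfP Hspan x (ltac:(lia)).
      rewrite {1}Ex (arrZ hM) (cfZ Hb Hspan); last by lia.
      rewrite -/(lam (Posz l)) -mulrA [lam _ * _]mulrC Lam_step //.
      by rewrite subrr.
    rewrite (al_uniq' x Hj); last by rewrite eq_sym.
    by rewrite (cf0 Hb Hspan) ?mul0r ?subrr //; lia.
  + move=> j x ->; rewrite fm0; apply/HO => l; by rewrite ecoef0.
- move=> j x Hx Hf.
  case: (boolP (Posz D0 <= j)) => Hj; last first.
    by rewrite (Mp0 _ _ Hx Hj); exists 0%N; exact: (killed0 hM).
  have := (HO _ _).1 Hf (absz j).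
  rewrite coef_fm Hj /=.
  have -> : (Posz (absz j) == j) = true by apply/eqP; lia.
  move/eqP; rewrite mulf_eq0 (negbTE (Lam_nz j)) orbF => /eqP Hc.
  rewrite (cfP Hspan x) ?Hc ?scale0r; last by lia.
  by exists 0%N; exact: (killed0 hM).
- move=> j y; exists (absz (Posz D0 - j)) => m Hm v.
  apply: along_arrowsInto => s Hs; apply: along_all => i z Hi.
  have Hi0 : Posz D0 <= i by lia.
  exists ((coef z (cp (absz i)) / Lam i) *: b i); split; first by left.
  apply/HO => l; rewrite ecoefB coef_fm Hi0 /=.
  case: (eqVneq (Posz l) i) => [El|Nl].
    rewrite (cfZ Hb Hspan) ?(cfb Hb Hspan) ?mulr1 ?divfK ?Lam_nz; try lia.
    have -> : absz i = l by lia.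
    by rewrite subrr.
  rewrite subr0.
  case: (coef z (cp l) =P 0) => // /eqP /ecoef_supp /andP[/eqP].
  by rewrite size_cp => Ei; rewrite Ei eqxx in Nl.
Qed.

End Walk2.


Unset Implicit Arguments.

Theorem proposition5p6 (k : fieldType) (V A : finType) (src tgt : A -> V)
  (hGK : finite_GKdim src tgt)
  (M : grmod k V A) (hM : is_grmod src tgt M)
  (hdim : exists J : int, forall j : int, J <= j ->
     exists x : car M j, x != 0 /\ forall y : car M j, exists c : k, y = c *: x) :
  ~ QGr_iso (@zero_spred _ _ _ M) (@zero_spred _ _ _ (zero_grmod k V A))
  <->
  exists (w : V) (p : seq A),
    simple_cycle src tgt w p /\
    QGr_iso (@zero_spred _ _ _ M) (O_ideal (src := src) (tgt := tgt) (w := w) p).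
Proof.
split; last first.
  by move=> [w [p [Hc Hi]]] H0; exact: (backward hM Hc Hi H0).
move=> Hnt.
have [J0 HJ0] := hdim.
pose J := absz J0.
have : forall j, exists x : car M j, Posz J <= j -> (x != 0 /\ forall y : car M j, exists c : k, y = c *: x).
  move=> j; case: (boolP (Posz J <= j)) => H.
    by have [x Hx] := HJ0 j (ltac:(rewrite /J in H; lia)); exists x.
  by exists 0.
case/dchoice => b Hbb.
have [J1 [HJJ1 HJ1]] : exists J1 : nat, (J <= J1)%N /\ forall j, Posz J1 <= j -> exists a, arr a (b j) != 0.
  apply: NNPP => Hn; apply: Hnt.
  apply: (torsion_iso hM (J := Posz J)); first by move=> j Hj; exact: (Hbb j Hj).2.
  move=> D; apply: NNPP => H2; apply: Hn; exists (maxn J (absz D)); split; first by lia.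
  move=> j Hj; apply: NNPP => H3; apply: H2; exists j; split; first by lia.
  move=> a; apply/eqP; apply: contraT => H4; exfalso; apply: H3; exists a; exact: H4.
have Hb : forall j : int, Posz J1 <= j -> b j != 0.
  by move=> j Hj; apply: (Hbb j _).1; lia.
have Hspan : forall j : int, Posz J1 <= j -> forall y : car M j, exists c : k, y = c *: b j.
  by move=> j Hj; apply: (Hbb j _).2; lia.
have [a0 _] := HJ1 (Posz J1) (ltac:(lia)).
pose v0 := src a0.
have [D2 [HJD2 Hrec]] := eventually_rec b J1 v0.
exists (w HJD2 Hrec), (p a0 HJD2 Hrec); split.
  exact: (p_cycle hM hGK Hb Hspan HJ1 a0 HJD2 Hrec).
exact: (iso hM hGK Hb Hspan HJ1 a0 HJD2 Hrec).
Qed.
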